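(* Let $n,N,L\ge1$ be integers and $0<p<1$. In the random model described in the context, for a read $(\mathbf{y},\mathbf{d}')\in\mathcal{Y}$ whose address part $\mathbf{y}$ has exactly $r$ erased positions, $$\mathbb{E}\big[|\mathcal{N}_{(\mathbf{y},\mathbf{d}')}|\;\big|\;(\mathbf{y},\mathbf{d}')\big]=N2^r(1+p)^{n-r}-1.$$ Further, $\mathbb{E}\big[|\mathcal{N}_{(\mathbf{y},\mathbf{d}')}|\big]=N(1+2p-p^2)^{n}-1$.
   Context: Model: Let $M=2^n$ and $C=\{0,1\}^n$ (addresses). Data parts are independent and uniform on $\{0,1\}^L$; each address $\mathbf{x}\in C$ carries one strand $(\mathbf{x},\mathbf{d})$. Each strand is transmitted $N$ times through $\mathsf{BEC}(p)$ (each symbol independently replaced by $*$ with probability $p$, independently across transmissions and strands); $\mathcal{Y}$ is the multiset of all $MN$ reads $(\mathbf{y},\mathbf{d}')$. An address $\mathbf{x}$ is compatible with a read $(\mathbf{y},\mathbf{d}')$ if $\mathbf{x}$ and $\mathbf{y}$ coincide at all non-erased positions of $\mathbf{y}$. The bipartite graph $\mathcal{G}$ has left vertices $C$, right vertices $\mathcal{Y}$, and an edge between $\mathbf{x}$ and $(\mathbf{y},\mathbf{d}')$ iff $\mathbf{x}$ is compatible with $(\mathbf{y},\mathbf{d}')$. The two-hop neighbourhood $\mathcal{N}_{(\mathbf{y},\mathbf{d}')}$ is the multiset of reads other than $(\mathbf{y},\mathbf{d}')$ itself that share at least one left neighbour with $(\mathbf{y},\mathbf{d}')$ in $\mathcal{G}$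 (equivalently, whose address part coincides with $\mathbf{y}$ at all positions where neither is erased). *)

(* Defs.v *)
(* Finite (discrete) probability space for the DNA-storage
   model: addresses C = {0,1}^n, data parts uniform on {0,1}^L, each of the
   M = 2^n strands read N times through BEC(p). *)
From mathcomp Require Import all_boot all_order all_algebra.
Set Implicit Arguments. Unset Strict Implicit. Unset Printing Implicit Defensive.
Import Order.TTheory GRing.Theory Num.Theory.
Local Open Scope ring_scope.

Section Model.
Variables (n N L : nat).

Definition addr := {ffun 'I_n -> bool}.
(* a received symbol: None is the erasure symbol * *)
Definition rsym := option bool.
Definition read := ({ffun 'I_n -> rsym} * {ffun 'I_L -> rsym})%type.
(* index of a read in the multiset Y: (address of the strand, transmission) *)
Definition ridx := (addr * 'I_N)%type.

(* sample space: data parts of every strand, erasure indicators for every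
   address / data symbol of every transmission of every strand *)
Definition outcome :=
  ({ffun addr -> {ffun 'I_L -> bool}} *
   {ffun ridx -> {ffun 'I_n -> bool}} *
   {ffun ridx -> {ffun 'I_L -> bool}})%type.

Definition data_of (w : outcome) := w.1.1.
Definition eraseA (w : outcome) := w.1.2.
Definition eraseD (w : outcome) := w.2.

Definition read_of (w : outcome) (j : ridx) : read :=
  ([ffun i => if eraseA w j i then None else Some (j.1 i)],
   [ffun i => if eraseD w j i then None else Some (data_of w j.1 i)]).

Definition compat (x : addr) (y : {ffun 'I_n -> rsym}) : bool :=
  [forall i, (y i == None) || (y i == Some (x i))].

(* size of the two-hop neighbourhood of read j in the graph G: number of
   reads (other than j itself) sharing at least one left neighbour with j *)
Definition nbhd_size (w : outcome) (j : ridx) : nat :=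
  #|[set j' : ridx | (j' != j) &&
       [exists x : addr, compat x (read_of w j').1 && compat x (read_of w j).1]]|.

Definition n_erased (v : read) : nat := #|[set i | v.1 i == None]|.

Variable R : realFieldType.
Variable p : R.

Definition bern (b : bool) : R := if b then p else 1 - p.

Definition weight (w : outcome) : R :=
  \prod_(x : addr) (2 ^+ L)^-1 *
  \prod_(j : ridx) ((\prod_(i < n) bern (eraseA w j i)) *
                    (\prod_(i < L) bern (eraseD w j i))).

Definition Pr (E : pred outcome) : R := \sum_(w | E w) weight w.
Definition Expect (X : outcome -> R) : R := \sum_w weight w * X w.
Definition CondExpect (X : outcome -> R) (E : pred outcome) : R :=
  (\sum_(w | E w) weight w * X w) / Pr E.

End Model.

(* Main.v *)
Require Import Defs.
From mathcomp Require Import all_boot all_order all_algebra.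
From mathcomp Require Import ring zify.
Import Order.TTheory GRing.Theory Num.Theory.
Set Implicit Arguments. Unset Strict Implicit. Unset Printing Implicit Defensive.
Local Open Scope ring_scope.

Lemma fix1 (R : comNzRingType) (I J : finType) (F g : J -> R) (i1 i2 : I) (a : J) :
  \sum_b F b = 1 -> i1 != i2 ->
  \sum_(f : {ffun I -> J} | f i1 == a) (\prod_i F (f i)) * g (f i2)
   = F a * \sum_b F b * g b.
Proof.
move=> hF ne.
pose G i b := (if i == i1 then (b == a)%:R else 1) * F b * (if i == i2 then g b else 1).
transitivity (\sum_(f : {ffun I -> J}) \prod_i G i (f i)).
  rewrite big_mkcond /=; apply: eq_bigr => f _.
  have ne' : i2 != i1 by rewrite eq_sym.
  rewrite /G (bigD1 i1) //= (bigD1 i2) //=.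
  rewrite [in RHS](bigD1 i1) //= [in RHS](bigD1 i2) //= eqxx (negbTE ne) (negbTE ne') eqxx.
  rewrite [X in _ = _ * (_ * X)](eq_bigr (fun i => F (f i))); last first.
    by move=> i /andP[/negbTE -> /negbTE ->]; rewrite mul1r mulr1.
  case: eqP => _ /=; [by ring | by rewrite !mul0r].
have ne' : i2 != i1 by rewrite eq_sym.
rewrite -bigA_distr_bigA /= (bigD1 i1) //= (bigD1 i2) //=.
rewrite [X in _ * (_ * X)]big1; last first.
  move=> i /andP[/negbTE Hi1 /negbTE Hi2]; rewrite /G Hi1 Hi2 -[RHS]hF; apply: eq_bigr => b _.
  by rewrite mul1r mulr1.
rewrite mulr1 /G eqxx (negbTE ne) (negbTE ne') eqxx.
rewrite (bigD1 a) //= eqxx big1 ?addr0; last by move=> b /negbTE ->; rewrite !mul0r.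
congr (_ * _); first by rewrite mul1r mulr1.
by apply: eq_bigr => b _; rewrite mul1r.
Qed.

Lemma fix0 (R : comNzRingType) (I J : finType) (F : J -> R) (i1 : I) (a : J) :
  \sum_b F b = 1 ->
  \sum_(f : {ffun I -> J} | f i1 == a) (\prod_i F (f i)) = F a.
Proof.
move=> hF.
pose G i b := (if i == i1 then (b == a)%:R else 1) * F b.
transitivity (\sum_(f : {ffun I -> J}) \prod_i G i (f i)).
  rewrite big_mkcond /=; apply: eq_bigr => f _.
  rewrite /G [in RHS](bigD1 i1) //= eqxx [in RHS](eq_bigr (fun i => F (f i))); last by move=> i /negbTE ->; rewrite mul1r.
  rewrite [in LHS](bigD1 i1) //=; case: eqP => _ /=; [by rewrite !mul1r| by rewrite !mul0r].
rewrite -bigA_distr_bigA /= (bigD1 i1) //= [X in _ * X]big1; last first.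
  by move=> i /negbTE Hi1; rewrite /G Hi1 -[RHS]hF; apply: eq_bigr => b _; rewrite mul1r.
rewrite mulr1 /G eqxx.
by rewrite (bigD1 a) //= eqxx big1 ?addr0 ?mul1r; last by move=> b /negbTE ->; rewrite !mul0r.
Qed.

Definition ind n N (j j' : ridx n N) (b b0 : {ffun 'I_n -> bool}) : bool :=
  [forall k, [|| b k, b0 k | j'.1 k == j.1 k]].

Lemma compat_iff n N L (w : outcome n N L) (j j' : ridx n N) :
  [exists x : addr n, compat x (read_of w j').1 && compat x (read_of w j).1]
  = ind j j' (eraseA w j') (eraseA w j).
Proof.
apply/existsP/forallP.
  move=> [x /andP[/forallP H1 /forallP H2]] k.
  move: (H1 k) (H2 k); rewrite /read_of /= !ffunE.
  case: (eraseA w j' k) => //; case: (eraseA w j k) => //=.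
  by move=> /eqP[->] /eqP[->].
move=> H.
exists [ffun k => if eraseA w j' k then j.1 k else j'.1 k].
apply/andP; split; apply/forallP => k; rewrite /read_of /= !ffunE; move: (H k);
  case: (eraseA w j' k) => //=; case: (eraseA w j k) => //=; by move/eqP=> ->.
Qed.

Lemma nbhd_sum (R : realFieldType) n N L (w : outcome n N L) j :
  (nbhd_size w j)%:R = \sum_(j' | j' != j) (ind j j' (eraseA w j') (eraseA w j))%:R :> R.
Proof.
rewrite /nbhd_size -sum1_card (eq_bigl (fun j' => (j' != j) && ind j j' (eraseA w j') (eraseA w j))); last first.
  by move=> j'; rewrite inE compat_iff.
rewrite big_mkcondr natr_sum; apply: eq_bigr => j' _.
by case: ind.
Qed.

Lemma forall_prod (R : comNzRingType) (I : finType) (P : pred I) :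
  ([forall k, P k])%:R = \prod_k (P k)%:R :> R.
Proof.
case: (boolP [forall k, P k]) => [/forallP H | /forallPn [k Hk]].
  by rewrite big1 // => k _; rewrite H.
by rewrite (bigD1 k) //= (negbTE Hk) mul0r.
Qed.

Lemma sum_bern (R : realFieldType) (p : R) m :
  \sum_(b : {ffun 'I_m -> bool}) \prod_i bern p (b i) = 1.
Proof.
rewrite -(bigA_distr_bigA (fun _ c => bern p c)) /=.
by rewrite big1 // => i _; rewrite big_bool /= addrC subrK.
Qed.

Definition rr (R : realFieldType) (p : R) (b : bool) : R := if b then 2 else 1 + p.

Lemma S_eq (R : realFieldType) (p : R) n N (j j' : ridx n N) (e0 : {ffun 'I_n -> bool}) :
  \sum_(b : {ffun 'I_n -> bool}) (\prod_i bern p (b i)) * (ind j j' b e0)%:R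
  = \prod_k (p + (1 - p) * (e0 k || (j'.1 k == j.1 k))%:R).
Proof.
transitivity (\prod_k \sum_(c : bool) bern p c * ([|| c, e0 k | j'.1 k == j.1 k])%:R); last first.
  by apply: eq_bigr => k _; rewrite big_bool /= mulr1.
rewrite bigA_distr_bigA /=; apply: eq_bigr => b _; rewrite /ind.
by rewrite (@forall_prod R _ (fun k => [|| b k, e0 k | j'.1 k == j.1 k])) -big_split.
Qed.

Lemma total_S (R : realFieldType) (p : R) n N (x0 : addr n) (e0 : {ffun 'I_n -> bool}) :
  \sum_(j' : ridx n N) \prod_k (p + (1 - p) * (e0 k || (j'.1 k == x0 k))%:R)
  = N%:R * \prod_k rr p (e0 k).
Proof.
rewrite -(pair_bigA _ (fun (x : addr n) (_ : 'I_N) => \prod_k (p + (1 - p) * (e0 k || (x k == x0 k))%:R))) /=.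
under eq_bigr => x _ do rewrite sumr_const card_ord.
rewrite sumrMnl [RHS]mulr_natl; congr (_ *+ _).
transitivity (\prod_k \sum_(c : bool) (p + (1 - p) * (e0 k || (c == x0 k))%:R)).
  by rewrite bigA_distr_bigA.
apply: eq_bigr => k _; rewrite big_bool /rr.
by case: (e0 k); case: (x0 k) => /=; ring.
Qed.

Lemma prod_rr (R : realFieldType) (p : R) n (P : pred 'I_n) :
  \prod_k rr p (P k) = 2 ^+ #|[set i | P i]| * (1 + p) ^+ (n - #|[set i | P i]|).
Proof.
rewrite (bigID P) /=.
rewrite (eq_bigr (fun _ => 2)); last by move=> i ->.
rewrite [X in _ * X](eq_bigr (fun _ => 1 + p)); last by move=> i /negbTE ->.
rewrite !prodr_const cardsE; congr (_ * _ ^+ _).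
have H := cardC P; rewrite card_ord in H.
have E : #|(fun i => ~~ P i)| = #|[predC P]| by apply: eq_card.
rewrite E. move: H. set a := #|P|. set b := #|[predC P]|. lia.
Qed.

Lemma key (R : realFieldType) (p : R) n N (j : ridx n N) (e0 : {ffun 'I_n -> bool}) :
  \sum_(a : {ffun ridx n N -> {ffun 'I_n -> bool}} | a j == e0)
     (\prod_j0 \prod_i bern p (a j0 i)) * \sum_(j' | j' != j) (ind j j' (a j') (a j))%:R
  = (\prod_i bern p (e0 i)) * (N%:R * \prod_k rr p (e0 k) - 1).
Proof.
transitivity (\sum_(j' | j' != j) \sum_(a : {ffun ridx n N -> {ffun 'I_n -> bool}} | a j == e0)
   (\prod_j0 \prod_i bern p (a j0 i)) * (ind j j' (a j') e0)%:R).
  rewrite exchange_big /=; apply: eq_bigr => a /eqP Ha.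
  by rewrite Ha mulr_sumr.
transitivity (\sum_(j' | j' != j) (\prod_i bern p (e0 i)) *
   \sum_(b : {ffun 'I_n -> bool}) (\prod_i bern p (b i)) * (ind j j' b e0)%:R).
  apply: eq_bigr => j' ne; have ne' : j != j' by rewrite eq_sym.
  exact: (fix1 (F := fun b : {ffun 'I_n -> bool} => \prod_i bern p (b i))
            (fun b => (ind j j' b e0)%:R) e0 (sum_bern p n) ne').
rewrite -mulr_sumr; congr (_ * _).
transitivity (\sum_(j' | j' != j) \prod_k (p + (1 - p) * (e0 k || (j'.1 k == j.1 k))%:R)).
  by apply: eq_bigr => j' _; exact: S_eq.
have T := total_S p N j.1 e0.
rewrite (bigD1 j) //= big1 in T; last by move=> k _; rewrite eqxx orbT mulr1 addrC subrK.
by rewrite -T addrC addrK.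
Qed.

Lemma big_cond_ind (R : comNzRingType) (T : finType) (P : pred T) (F : T -> R) :
  \sum_(w | P w) F w = \sum_w (P w)%:R * F w.
Proof. by rewrite big_mkcond; apply: eq_bigr => w _; case: (P w); rewrite ?mul1r ?mul0r. Qed.

Lemma decomp (R : comNzRingType) n N L (G : outcome n N L -> R)
  (f : {ffun addr n -> {ffun 'I_L -> bool}} -> {ffun ridx n N -> {ffun 'I_L -> bool}} -> R)
  (g : {ffun ridx n N -> {ffun 'I_n -> bool}} -> R) :
  (forall d a e, G ((d, a), e) = f d e * g a) ->
  \sum_w G w = (\sum_d \sum_e f d e) * \sum_a g a.
Proof.
move=> H.
transitivity (\sum_(x : {ffun addr n -> {ffun 'I_L -> bool}} * {ffun ridx n N -> {ffun 'I_n -> bool}})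
   \sum_(e : {ffun ridx n N -> {ffun 'I_L -> bool}}) G (x, e)).
  rewrite pair_bigA /=. apply eq_bigr. move=> [x e] _. by [].
transitivity (\sum_(d : {ffun addr n -> {ffun 'I_L -> bool}}) \sum_(a : {ffun ridx n N -> {ffun 'I_n -> bool}})
   \sum_(e : {ffun ridx n N -> {ffun 'I_L -> bool}}) G ((d, a), e)).
  rewrite [RHS]pair_bigA /=. apply eq_bigr. move=> [d a] _. by [].
rewrite mulr_suml; apply: eq_bigr => d _.
rewrite mulr_sumr; apply: eq_bigr => a _.
rewrite mulr_suml; apply: eq_bigr => e _; exact: H.
Qed.

Lemma weightE (R : realFieldType) (p : R) n N L d a e :
  weight p ((d, a, e) : outcome n N L) =
  (\prod_(x : addr n) (2 ^+ L)^-1 * \prod_(j : ridx n N) \prod_(i < L) bern p (e j i))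
  * \prod_(j : ridx n N) \prod_(i < n) bern p (a j i).
Proof. rewrite /weight big_split /=; ring. Qed.

Lemma sum_WD (R : realFieldType) (p : R) (I : finType) m :
  \sum_(e : {ffun I -> {ffun 'I_m -> bool}}) \prod_j \prod_(i < m) bern p (e j i) = 1.
Proof.
transitivity (\prod_(j : I) \sum_(b : {ffun 'I_m -> bool}) \prod_(i < m) bern p (b i)).
  by rewrite bigA_distr_bigA.
by rewrite big1 // => j _; exact: sum_bern.
Qed.

Lemma sum_c (R : realFieldType) n L :
  \sum_(d : {ffun addr n -> {ffun 'I_L -> bool}}) \prod_(x : addr n) (2 ^+ L)^-1 = 1 :> R.
Proof.
transitivity (\prod_(x : addr n) \sum_(b : {ffun 'I_L -> bool}) (2 ^+ L)^-1 : R).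
  by rewrite bigA_distr_bigA.
rewrite big1 // => x _.
rewrite sumr_const card_ffun card_bool card_ord.
rewrite -[_ *+ _]mulr_natr natrX.
rewrite mulVf //.
by rewrite expf_neq0 // pnatr_eq0.
Qed.

Lemma event_eq n N L (w : outcome n N L) j (v : read n L) :
  (read_of w j == v) = (eraseA w j == [ffun i => v.1 i == None]) &&
     ([forall i, (v.1 i == None) || (v.1 i == Some (j.1 i))] && ((read_of w j).2 == v.2)).
Proof.
case: v => y dv /=.
rewrite /read_of /= xpair_eqE andbA; congr (_ && _).
apply/eqP/andP => [H | [/eqP H1 /forallP H2]].
  rewrite -H; split; [apply/eqP/ffunP => i | apply/forallP => i]; rewrite !ffunE; by case: (eraseA w j i) => //=.
apply/ffunP => i; rewrite !ffunE; have := H2 i; move/ffunP: H1 => /(_ i); rewrite ffunE => ->.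
by case: (y i) => //= b /eqP[->].
Qed.

Theorem lemma5 (R : realFieldType) (n N L : nat) (p : R) :
  (1 <= n)%N -> (1 <= N)%N -> (1 <= L)%N -> 0 < p -> p < 1 ->
  (forall (j : ridx n N) (v : read n L),
     0 < Pr p (fun w : outcome n N L => read_of w j == v) ->
     CondExpect p (fun w => (nbhd_size w j)%:R) (fun w => read_of w j == v)
       = N%:R * 2 ^+ n_erased v * (1 + p) ^+ (n - n_erased v) - 1)
  /\
  (forall j : ridx n N,
     Expect p (fun w : outcome n N L => (nbhd_size w j)%:R)
       = N%:R * (1 + 2 * p - p ^+ 2) ^+ n - 1).
Proof.
move=> _ _ _ p0 p1; split.
- move=> j v hPr.
  set e0 := [ffun i => v.1 i == None].
  set C := [forall i, (v.1 i == None) || (v.1 i == Some (j.1 i))].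
  pose ED (d : {ffun addr n -> {ffun 'I_L -> bool}}) (e : {ffun ridx n N -> {ffun 'I_L -> bool}}) :=
    ([ffun i => if e j i then None else Some (d j.1 i)] == v.2).
  pose c := \prod_(x : addr n) (2 ^+ L)^-1 : R.
  pose WD (e : {ffun ridx n N -> {ffun 'I_L -> bool}}) := \prod_(j0 : ridx n N) \prod_(i < L) bern p (e j0 i).
  pose WA (a : {ffun ridx n N -> {ffun 'I_n -> bool}}) := \prod_(j0 : ridx n N) \prod_(i < n) bern p (a j0 i).
  pose K := \sum_d \sum_e (C && ED d e)%:R * (c * WD e).
  have HPr : Pr p (fun w : outcome n N L => read_of w j == v) = K * (\prod_i bern p (e0 i)).
    rewrite /Pr big_cond_ind (@decomp _ _ _ _ _ (fun d e => (C && ED d e)%:R * (c * WD e))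
       (fun a => (a j == e0)%:R * WA a)).
      congr (_ * _); rewrite -big_cond_ind.
      exact: (fix0 (F := fun b : {ffun 'I_n -> bool} => \prod_i bern p (b i)) j e0 (sum_bern p n)).
    move=> d a e; rewrite event_eq weightE /=.
    rewrite /ED /C /e0 /c /WD /WA /eraseA /data_of /=.
    case: (a j == _); case: [forall i, _]; case: (_ == v.2) => /=; ring.
  have HPr' : K * \prod_i bern p (e0 i) != 0 by move: hPr; rewrite HPr => /lt0r_neq0.
  have HNum : \sum_(w | read_of w j == v) weight p w * (nbhd_size w j)%:R
      = K * (\prod_i bern p (e0 i) * (N%:R * \prod_k rr p (e0 k) - 1)).
    rewrite big_cond_ind (@decomp _ _ _ _ _ (fun d e => (C && ED d e)%:R * (c * WD e))
      (fun a => (a j == e0)%:R * (WA a * \sum_(j' | j' != j) (ind j j' (a j') (a j))%:R))).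
      by congr (_ * _); rewrite -big_cond_ind; exact: key.
    move=> d a e; rewrite event_eq weightE nbhd_sum.
    rewrite /ED /C /e0 /c /WD /WA /eraseA /data_of /=.
    case: (a j == _); case: [forall i, _]; case: (_ == v.2) => /=; ring.
  rewrite /CondExpect HNum HPr mulrA [in LHS]mulrC mulrA mulVf // mul1r.
  rewrite (eq_bigr (fun k => rr p (v.1 k == None))); last by move=> k _; rewrite ffunE.
  by rewrite prod_rr /n_erased mulrA.
- move=> j.
  pose c := \prod_(x : addr n) (2 ^+ L)^-1 : R.
  pose WD (e : {ffun ridx n N -> {ffun 'I_L -> bool}}) := \prod_(j0 : ridx n N) \prod_(i < L) bern p (e j0 i).
  pose WA (a : {ffun ridx n N -> {ffun 'I_n -> bool}}) := \prod_(j0 : ridx n N) \prod_(i < n) bern p (a j0 i).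
  rewrite /Expect (@decomp _ _ _ _ _ (fun d e => c * WD e)
     (fun a => WA a * \sum_(j' | j' != j) (ind j j' (a j') (a j))%:R)); last first.
    by move=> d a e; rewrite weightE nbhd_sum /c /WD /WA /eraseA /=; ring.
  have -> : \sum_(d : {ffun addr n -> {ffun 'I_L -> bool}}) \sum_e c * WD e = 1.
    rewrite -[RHS](sum_c R n L); apply: eq_bigr => d _.
    by rewrite -mulr_sumr /WD sum_WD mulr1.
  rewrite mul1r (partition_big (fun a : {ffun ridx n N -> {ffun 'I_n -> bool}} => a j) xpredT) //=.
  transitivity (\sum_(e0 : {ffun 'I_n -> bool}) (\prod_i bern p (e0 i)) * (N%:R * \prod_k rr p (e0 k) - 1)).
    by apply: eq_bigr => e0 _; exact: key.
  under eq_bigr => e0 _ do rewrite mulrBr mulr1.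
  rewrite sumrB sum_bern; congr (_ - 1).
  under eq_bigr => e0 _ do rewrite mulrCA -big_split /=.
  rewrite -mulr_sumr; congr (_ * _).
  transitivity (\prod_(k < n) \sum_(b : bool) bern p b * rr p b).
    by rewrite bigA_distr_bigA.
  rewrite (eq_bigr (fun _ => 1 + 2 * p - p ^+ 2)); last first.
    move=> k _; rewrite big_bool /rr /bern /=. ring.
  by rewrite prodr_const card_ord.
Qed.
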